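(* Let $q>2$ be an integer and $z\geq 2$. Consider the mean-field equation in $u\in[0,1)$, $$u=\frac{1-\exp(\Delta_{\beta,q,z}(u))}{1+(q-1)\exp(\Delta_{\beta,q,z}(u))},\qquad\Delta_{\beta,q,z}(u):=-\frac{\beta}{q^{z-1}}\Big[(1+(q-1)u)^{z-1}-(1-u)^{z-1}\Big].$$ There exist $0<\beta_0(q,z)<\beta_1(q,z)$ such that: for $0<\beta<\beta_0$ the mean-field equation has only the trivial solution $u=0$; for $\beta_0<\beta<\beta_1$ it has exactly two additional solutions $0<u_1<u_2<1$; for $\beta=\beta_0$ or $\beta\geq\beta_1$ it has exactly one additional solution $0<u_2<1$. *)

(* Defs.v *)
From Stdlib Require Import Reals Lra.
Open Scope R_scope.

(* Delta_{beta,q,z}(u) = -(beta / q^(z-1)) [ (1+(q-1)u)^(z-1) - (1-u)^(z-1) ],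
   with real exponent z-1 (bases are positive for u in [0,1)). *)
Definition Delta (beta : R) (q : nat) (z : R) (u : R) : R :=
  - (beta / Rpower (INR q) (z - 1)) *
    (Rpower (1 + (INR q - 1) * u) (z - 1) - Rpower (1 - u) (z - 1)).

Definition MF (beta : R) (q : nat) (z : R) (u : R) : R :=
  (1 - exp (Delta beta q z u)) / (1 + (INR q - 1) * exp (Delta beta q z u)).

Definition is_sol (beta : R) (q : nat) (z : R) (u : R) : Prop :=
  0 <= u < 1 /\ u = MF beta q z u.

(* Main.v *)
Require Import Defs.
From Stdlib Require Import Reals Lra Psatz.
From Coquelicot Require Import Coquelicot.
Open Scope R_scope.
Open Scope R_scope.

Lemma deriv_cont f x l : is_derive f x l -> continuity_pt f x.
Proof. intro H. apply derivable_continuous_pt. exists l. now apply is_derive_Reals. Qed.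

Lemma mvt_incr f f' a b : a < b -> (forall x, a <= x <= b -> is_derive f x (f' x)) ->
  (forall x, a < x < b -> 0 < f' x) -> f a < f b.
Proof.
  intros Hab Hd Hp. destruct (MVT_cor2 f f' a b Hab) as [c [Hc1 Hc2]].
  { intros; apply is_derive_Reals; auto. }
  specialize (Hp c Hc2). nra.
Qed.

Lemma mvt_decr f f' a b : a < b -> (forall x, a <= x <= b -> is_derive f x (f' x)) ->
  (forall x, a < x < b -> f' x < 0) -> f b < f a.
Proof.
  intros Hab Hd Hp. destruct (MVT_cor2 f f' a b Hab) as [c [Hc1 Hc2]].
  { intros; apply is_derive_Reals; auto. }
  specialize (Hp c Hc2). nra.
Qed.

Lemma chain0 f f' : (forall x, 0 <= x -> is_derive f x (f' x)) ->
  (forall x, 0 < x -> 0 < f' x) -> 0 <= f 0 -> forall x, 0 < x -> 0 < f x.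
Proof.
  intros Hd Hp H0 x Hx.
  assert (f 0 < f x). { apply (mvt_incr f f'); auto. intros; apply Hd; lra.
    intros; apply Hp; lra. }
  lra.
Qed.

Definition Nf s := s * exp s - exp s + 1.
Definition Mf s := exp s - 1 - s.

Lemma M_pos s : 0 < s -> 0 < Mf s.
Proof. intro H. unfold Mf. pose proof (exp_ineq1 s). lra. Qed.

Lemma N_pos : forall s, 0 < s -> 0 < Nf s.
Proof.
  apply (chain0 Nf (fun s => s * exp s)).
  - intros x _. unfold Nf. auto_derive; [easy| ring].
  - intros x Hx. pose proof (exp_pos x). nra.
  - unfold Nf. rewrite exp_0. lra.
Qed.

Lemma NM_lt : forall s, 0 < s -> Mf s < Nf s.
Proof.
  assert (H1 : forall s, 0 < s -> 0 < (s - 1) * exp s + 1).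
  { apply (chain0 _ (fun s => s * exp s)).
    - intros x _. auto_derive; [easy| ring].
    - intros x Hx. pose proof (exp_pos x). nra.
    - rewrite exp_0. lra. }
  assert (H2 : forall s, 0 < s -> 0 < (s - 2) * exp s + s + 2).
  { apply (chain0 _ (fun s => (s - 1) * exp s + 1)).
    - intros x _. auto_derive; [easy| ring].
    - exact H1.
    - rewrite exp_0. lra. }
  intros s Hs. specialize (H2 s Hs). unfold Nf, Mf. nra.
Qed.

Definition Wf s := (s-5)*exp s*exp s + (2*s^3 - 3*s^2+8*s+10)*exp s - (2*s^2+9*s+5).

Lemma W_pos : forall s, 0 < s -> 0 < Wf s.
Proof.
  assert (Hj : forall s, 0 < s -> 0 < (8*s-4)*exp s + 12).
  { apply (chain0 _ (fun s => (8*s+4)*exp s)).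
    - intros x _. auto_derive; [easy| ring].
    - intros x Hx. pose proof (exp_pos x). nra.
    - rewrite exp_0. lra. }
  assert (Hk2 : forall s, 0 < s -> 0 < (8*s-12)*exp s + 12*s + 30).
  { apply (chain0 _ (fun s => (8*s-4)*exp s + 12)).
    - intros x _. auto_derive; [easy| ring].
    - exact Hj.
    - rewrite exp_0. lra. }
  assert (Hk1 : forall s, 0 < s -> 0 < (8*s-20)*exp s + 6*s^2 + 30*s + 26).
  { apply (chain0 _ (fun s => (8*s-12)*exp s + 12*s + 30)).
    - intros x _. auto_derive; [easy| ring].
    - exact Hk2.
    - rewrite exp_0. lra. }
  assert (Hk : forall s, 0 < s -> 0 < (8*s-28)*exp s + 2*s^3 + 15*s^2 + 26*s + 28).
  { apply (chain0 _ (fun s => (8*s-20)*exp s + 6*s^2 + 30*s + 26)).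
    - intros x _. auto_derive; [easy| ring].
    - exact Hk1.
    - rewrite exp_0. lra. }
  assert (Hf2 : forall s, 0 < s -> 0 < (4*s-16)*exp s*exp s + (2*s^3+9*s^2+8*s+20)*exp s - 4).
  { apply (chain0 _ (fun s => exp s * ((8*s-28)*exp s + 2*s^3 + 15*s^2 + 26*s + 28))).
    - intros x _. auto_derive; [easy| ring].
    - intros x Hx. apply Rmult_lt_0_compat. apply exp_pos. now apply Hk.
    - rewrite exp_0. lra. }
  assert (Hf1 : forall s, 0 < s -> 0 < (2*s-9)*exp s*exp s + (2*s^3+3*s^2+2*s+18)*exp s - (4*s+9)).
  { apply (chain0 _ (fun s => (4*s-16)*exp s*exp s + (2*s^3+9*s^2+8*s+20)*exp s - 4)).
    - intros x _. auto_derive; [easy| ring].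
    - exact Hf2.
    - rewrite exp_0. lra. }
  apply (chain0 _ (fun s => (2*s-9)*exp s*exp s + (2*s^3+3*s^2+2*s+18)*exp s - (4*s+9))).
  - intros x _. unfold Wf. auto_derive; [easy| ring].
  - exact Hf1.
  - unfold Wf. rewrite exp_0. lra.
Qed.

Lemma Q_bound s : 0 < s ->
  s*s*exp s / Nf s - s*(exp s - 1)/Mf s - (1 - Mf s / Nf s) < 1/2.
Proof.
  intro Hs. pose proof (N_pos s Hs). pose proof (M_pos s Hs). pose proof (W_pos s Hs).
  assert (E : s*s*exp s / Nf s - s*(exp s - 1)/Mf s - (1 - Mf s / Nf s) =
     (s*s*exp s * Mf s - s*(exp s - 1)*Nf s - (Nf s - Mf s)*Mf s)/(Nf s * Mf s)).
  { field; lra. }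
  rewrite E. apply Rmult_lt_reg_r with (Nf s * Mf s). nra.
  unfold Rdiv at 1. rewrite Rmult_assoc, Rinv_l by nra. rewrite Rmult_1_r.
  assert (Nf s * Mf s - 2*(s*s*exp s * Mf s - s*(exp s - 1)*Nf s - (Nf s - Mf s)*Mf s) = Wf s).
  { unfold Nf, Mf, Wf. ring. }
  nra.
Qed.

Definition psi c m w := ln w + m * ln (exp w + c) - ln (exp (m*w) - 1).
Definition dpsi c m w := /w + m*exp w/(exp w + c) - m*exp(m*w)/(exp(m*w) - 1).
Definition Sf c m w := (w + ln (Mf (m*w)) - ln c - ln (Nf (m*w))) / w.
Definition dSf c m w := let s := m*w in
  (ln c + ln (Nf s) - ln (Mf s) - s*s*exp s/Nf s + s*(exp s - 1)/Mf s)/(w*w).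

Lemma expm1_pos s : 0 < s -> 0 < exp s - 1.
Proof. intro. pose proof (exp_ineq1 s). lra. Qed.

Lemma psi_deriv c m w : 0 < c -> 0 < m -> 0 < w -> is_derive (psi c m) w (dpsi c m w).
Proof.
  intros Hc Hm Hw. assert (0 < m*w) by nra. pose proof (expm1_pos _ H).
  pose proof (exp_pos w).
  unfold psi, dpsi. auto_derive.
  - repeat split; lra.
  - field. lra.
Qed.

Lemma Sf_deriv c m w : 0 < c -> 0 < m -> 0 < w -> is_derive (Sf c m) w (dSf c m w).
Proof.
  intros Hc Hm Hw. assert (Hs: 0 < m*w) by nra.
  pose proof (N_pos _ Hs). pose proof (M_pos _ Hs).
  unfold Sf, dSf, Nf, Mf in *. auto_derive.
  - repeat split; lra.
  - unfold Rminus. field. repeat split; lra.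
Qed.

Lemma ln2_gt : 1/2 < ln 2.
Proof.
  assert (exp (1/2) < 2).
  { assert (exp (1/2) * exp (1/2) = exp 1) by (rewrite <- exp_plus; f_equal; lra).
    pose proof exp_le_3. pose proof (exp_pos (1/2)). nra. }
  rewrite <- (ln_exp (1/2)). apply ln_increasing. apply exp_pos. lra.
Qed.

Lemma dSf_pos c m w : 2 <= c -> 0 < m -> 0 < w -> 0 < dSf c m w.
Proof.
  intros Hc Hm Hw. assert (Hs: 0 < m*w) by nra.
  unfold dSf. set (s := m*w) in *.
  pose proof (N_pos _ Hs). pose proof (M_pos _ Hs). pose proof (Q_bound _ Hs).
  assert (HL : 1 - Mf s / Nf s <= ln (Nf s) - ln (Mf s)).
  { pose proof (exp_ineq1_le (ln (Mf s / Nf s))). rewrite exp_ln in H2.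
    rewrite ln_div in H2 by lra. lra. apply Rdiv_lt_0_compat; lra. }
  assert (Hc2 : 1/2 < ln c).
  { pose proof ln2_gt. assert (ln 2 <= ln c) by (apply ln_le; lra). lra. }
  apply Rdiv_lt_0_compat; [| nra]. lra.
Qed.

Lemma Sf_incr c m a b : 2 <= c -> 0 < m -> 0 < a -> a < b -> Sf c m a < Sf c m b.
Proof.
  intros. apply (mvt_incr _ (dSf c m)); auto.
  - intros; apply Sf_deriv; lra.
  - intros; apply dSf_pos; lra.
Qed.

Lemma dpsi_eq c m w : 0 < c -> 0 < m -> 0 < w ->
  dpsi c m w = (exp w * Mf (m*w) - c * Nf (m*w)) / ((exp w + c) * w * (exp (m*w) - 1)).
Proof.
  intros Hc Hm Hw. assert (0 < m*w) by nra. pose proof (expm1_pos _ H).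
  pose proof (exp_pos w). unfold dpsi, Mf, Nf. field. repeat split; lra.
Qed.

Lemma Sf_sign c m w : 0 < c -> 0 < m -> 0 < w ->
  (0 < Sf c m w <-> c * Nf (m*w) < exp w * Mf (m*w)).
Proof.
  intros Hc Hm Hw. assert (Hs: 0 < m*w) by nra.
  pose proof (N_pos _ Hs). pose proof (M_pos _ Hs). pose proof (exp_pos w).
  unfold Sf.
  assert (E : w + ln (Mf (m*w)) - ln c - ln (Nf (m*w)) =
              ln (exp w * Mf (m*w)) - ln (c * Nf (m*w))).
  { rewrite !ln_mult, ln_exp by lra. ring. }
  rewrite E. split; intro H2.
  - assert (0 < ln (exp w * Mf (m * w)) - ln (c * Nf (m * w))).
    { apply Rmult_lt_reg_r with (/w). apply Rinv_0_lt_compat; lra. rewrite Rmult_0_l. exact H2. }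
    destruct (Rlt_or_le (c * Nf (m*w)) (exp w * Mf (m*w))) as [h|h]; auto.
    assert (ln (exp w * Mf (m * w)) <= ln (c * Nf (m * w))) by (apply ln_le; nra). lra.
  - apply Rdiv_lt_0_compat; auto. assert (ln (c * Nf (m * w)) < ln (exp w * Mf (m * w))).
    apply ln_increasing; nra. lra.
Qed.

Lemma Sf_sign_neg c m w : 0 < c -> 0 < m -> 0 < w ->
  (Sf c m w < 0 <-> exp w * Mf (m*w) < c * Nf (m*w)).
Proof.
  intros Hc Hm Hw. assert (Hs: 0 < m*w) by nra.
  pose proof (N_pos _ Hs). pose proof (M_pos _ Hs). pose proof (exp_pos w).
  unfold Sf.
  assert (E : w + ln (Mf (m*w)) - ln c - ln (Nf (m*w)) =
              ln (exp w * Mf (m*w)) - ln (c * Nf (m*w))).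
  { rewrite !ln_mult, ln_exp by lra. ring. }
  rewrite E. split; intro H2.
  - assert (ln (exp w * Mf (m * w)) - ln (c * Nf (m * w)) < 0).
    { apply Rmult_lt_reg_r with (/w). apply Rinv_0_lt_compat; lra. rewrite Rmult_0_l. exact H2. }
    destruct (Rlt_or_le (exp w * Mf (m*w)) (c * Nf (m*w))) as [h|h]; auto.
    assert (ln (c * Nf (m * w)) <= ln (exp w * Mf (m * w))) by (apply ln_le; nra). lra.
  - assert (ln (exp w * Mf (m * w)) < ln (c * Nf (m * w))).
    apply ln_increasing; nra.
    unfold Rdiv. apply Rmult_neg_pos. lra. apply Rinv_0_lt_compat; lra.
Qed.

Lemma dpsi_pos c m w : 0 < c -> 0 < m -> 0 < w -> 0 < Sf c m w -> 0 < dpsi c m w.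
Proof.
  intros Hc Hm Hw H. apply Sf_sign in H; auto. rewrite dpsi_eq by auto.
  assert (0 < m*w) by nra. pose proof (expm1_pos _ H0). pose proof (exp_pos w).
  apply Rdiv_lt_0_compat. lra. apply Rmult_lt_0_compat; [|lra]. nra.
Qed.

Lemma dpsi_neg c m w : 0 < c -> 0 < m -> 0 < w -> Sf c m w < 0 -> dpsi c m w < 0.
Proof.
  intros Hc Hm Hw H. apply Sf_sign_neg in H; auto. rewrite dpsi_eq by auto.
  assert (0 < m*w) by nra. pose proof (expm1_pos _ H0). pose proof (exp_pos w).
  unfold Rdiv. apply Rmult_neg_pos. lra. apply Rinv_0_lt_compat.
  apply Rmult_lt_0_compat; [|lra]. nra.
Qed.

Lemma dpsi_pos_rev c m w : 0 < c -> 0 < m -> 0 < w -> 0 < dpsi c m w -> 0 < Sf c m w.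
Proof.
  intros Hc Hm Hw H. apply Sf_sign; auto. rewrite dpsi_eq in H by auto.
  assert (0 < m*w) by nra. pose proof (expm1_pos _ H0). pose proof (exp_pos w).
  assert (0 < (exp w + c) * w * (exp (m * w) - 1)) by (apply Rmult_lt_0_compat; [|lra]; nra).
  assert (0 < exp w * Mf (m * w) - c * Nf (m * w)).
  { apply Rmult_lt_reg_r with (/((exp w + c) * w * (exp (m * w) - 1))).
    apply Rinv_0_lt_compat; lra. rewrite Rmult_0_l. exact H. }
  lra.
Qed.

Section Shape.
Variables c m : R.
Hypothesis Hc : 2 <= c.
Hypothesis Hm : 0 < m.

Lemma psi_cont w : 0 < w -> continuity_pt (psi c m) w.
Proof. intro. apply (deriv_cont _ _ (dpsi c m w)). apply psi_deriv; lra. Qed.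

Lemma Sf_cont w : 0 < w -> continuity_pt (Sf c m) w.
Proof. intro. apply (deriv_cont _ _ (dSf c m w)). apply Sf_deriv; lra. Qed.

Lemma ln_le_sub1 x : 0 < x -> ln x <= x - 1.
Proof. intro. pose proof (exp_ineq1_le (ln x)). rewrite exp_ln in H0; lra. Qed.

Lemma psi_ge_ln w : 0 < w -> ln w < psi c m w.
Proof.
  intro Hw. unfold psi. assert (0 < m*w) by nra. pose proof (expm1_pos _ H).
  assert (ln (exp (m*w) - 1) < m*w).
  { rewrite <- (ln_exp (m*w)) at 2. apply ln_increasing; lra. }
  assert (w <= ln (exp w + c)).
  { rewrite <- (ln_exp w) at 1. apply ln_le. apply exp_pos. lra. }
  nra.
Qed.

Definition L1 := m * ln (1 + c) - ln m.

Lemma psi_upper w : 0 < w -> psi c m w <= m * ln (exp w + c) - ln m.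
Proof.
  intro Hw. unfold psi. assert (0 < m*w) by nra. pose proof (expm1_pos _ H).
  assert (ln (m*w) <= ln (exp (m*w) - 1)).
  { apply ln_le; auto. pose proof (exp_ineq1_le (m*w)). lra. }
  rewrite ln_mult in H1 by lra. lra.
Qed.

Lemma psi_lower w : 0 < w -> L1 - m * w <= psi c m w.
Proof.
  intro Hw. unfold psi, L1. assert (Hs: 0 < m*w) by nra. pose proof (expm1_pos _ Hs).
  pose proof (N_pos _ Hs). unfold Nf in H0.
  assert (ln (exp (m*w) - 1) <= ln (m * w * exp (m*w))).
  { apply ln_le; auto. lra. }
  rewrite !ln_mult, ln_exp in H1 by first [apply exp_pos | nra | lra].
  assert (ln (1 + c) <= ln (exp w + c)).
  { apply ln_le. lra. pose proof (exp_ineq1_le w). lra. }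
  nra.
Qed.

Lemma exists_wstar : exists ws, 0 < ws /\
  (forall w, 0 < w < ws -> dpsi c m w < 0) /\ (forall w, ws < w -> 0 < dpsi c m w).
Proof.
  set (w1 := ln c).
  assert (Hw1 : 0 < w1). { unfold w1. rewrite <- ln_1. apply ln_increasing; lra. }
  assert (HS1 : Sf c m w1 < 0).
  { apply Sf_sign_neg; try lra. replace (exp w1) with c by (unfold w1; rewrite exp_ln; lra).
    assert (0 < m*w1) by nra. pose proof (NM_lt _ H).
    apply Rmult_lt_compat_l; lra. }
  set (w2 := w1 + 1 + exp (psi c m w1)).
  assert (Hw12 : w1 < w2). { unfold w2. pose proof (exp_pos (psi c m w1)). lra. }
  assert (Hp2 : psi c m w1 < psi c m w2).
  { pose proof (psi_ge_ln w2 ltac:(lra)).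
    assert (psi c m w1 < ln w2).
    { rewrite <- (ln_exp (psi c m w1)) at 1. apply ln_increasing. apply exp_pos.
      unfold w2; lra. }
    lra. }
  destruct (MVT_cor2 (psi c m) (dpsi c m) w1 w2 Hw12) as [xi [Hxi1 Hxi2]].
  { intros; apply is_derive_Reals, psi_deriv; lra. }
  assert (Hd : 0 < dpsi c m xi) by nra.
  apply dpsi_pos_rev in Hd; try lra.
  destruct (Ranalysis5.IVT_interv (Sf c m) w1 xi) as [ws [Hws1 Hws2]]; try lra.
  { intros; apply Sf_cont; lra. }
  exists ws. split; [lra|]. split.
  - intros w Hw. apply dpsi_neg; try lra. rewrite <- Hws2. apply Sf_incr; lra.
  - intros w Hw. apply dpsi_pos; try lra. rewrite <- Hws2. apply Sf_incr; lra.
Qed.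

End Shape.

Section Shape2.
Variables c m ws : R.
Hypothesis Hc : 2 <= c.
Hypothesis Hm : 0 < m.
Hypothesis Hws : 0 < ws.
Hypothesis Hneg : forall w, 0 < w < ws -> dpsi c m w < 0.
Hypothesis Hpos : forall w, ws < w -> 0 < dpsi c m w.

Let psi := psi c m.

Lemma psi_decr a b : 0 < a -> a < b -> b <= ws -> psi b < psi a.
Proof.
  intros. apply (mvt_decr _ (dpsi c m)); auto.
  - intros; apply psi_deriv; lra.
  - intros; apply Hneg; lra.
Qed.

Lemma psi_incr a b : ws <= a -> a < b -> psi a < psi b.
Proof.
  intros. apply (mvt_incr _ (dpsi c m)); auto.
  - intros; apply psi_deriv; lra.
  - intros; apply Hpos; lra.
Qed.

Lemma psi_min w : 0 < w -> w <> ws -> psi ws < psi w.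
Proof.
  intros Hw Hne. destruct (Rlt_or_le w ws).
  - apply psi_decr; lra.
  - apply psi_incr; lra.
Qed.

Lemma psi_lt_L1 w : 0 < w -> w <= ws -> psi w < L1 c m.
Proof.
  intros Hw Hw2. set (eps := psi (w/2) - psi w).
  assert (Heps : 0 < eps) by (unfold eps; apply Rlt_Rminus || idtac; pose proof (psi_decr (w/2) w); lra).
  set (K := 1 + eps * (1 + c) / (2*m)).
  assert (HK : 1 < K). { unfold K. assert (0 < eps * (1+c)/(2*m)). apply Rdiv_lt_0_compat; nra. lra. }
  set (v := Rmin (w/2) (ln K)).
  assert (Hlk : 0 < ln K) by (rewrite <- ln_1; apply ln_increasing; lra).
  assert (Hv : 0 < v) by (unfold v; apply Rmin_glb_lt; lra).
  assert (Hv1 : v <= w/2) by apply Rmin_l.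
  assert (Hv2 : exp v <= K).
  { rewrite <- (exp_ln K) by lra. destruct (Req_dec v (ln K)) as [e|e]. rewrite e; lra.
    left. apply exp_increasing. pose proof (Rmin_r (w/2) (ln K)). fold v in H. lra. }
  assert (H1 : psi (w/2) <= psi v).
  { destruct (Req_dec v (w/2)) as [e|e]. rewrite e; lra. left. apply psi_decr; lra. }
  pose proof (psi_upper c m Hm v Hv).
  assert (ln (exp v + c) - ln (1 + c) <= (exp v - 1)/(1+c)).
  { rewrite <- ln_div by (try pose proof (exp_pos v); lra).
    pose proof (ln_le_sub1 ((exp v + c)/(1+c))).
    assert (0 < (exp v + c)/(1+c)). apply Rdiv_lt_0_compat; pose proof (exp_pos v); lra.
    specialize (H0 H2). assert ((exp v + c) / (1 + c) - 1 = (exp v - 1)/(1+c)) by (field; lra). lra. }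
  assert ((exp v - 1)/(1+c) <= eps / (2*m)).
  { unfold Rdiv. apply Rmult_le_reg_r with (1+c). lra.
    rewrite Rmult_assoc, Rinv_l, Rmult_1_r by lra. unfold K in Hv2.
    assert (eps * (1+c)/(2*m) = eps * / (2 * m) * (1 + c)) by (field; lra). lra. }
  unfold L1. fold psi in H. 
  assert (m * (eps / (2*m)) = eps/2) by (field; lra).
  assert (m * ln (exp v + c) <= m * ln (1 + c) + eps/2).
  { assert (m * (ln (exp v + c) - ln (1 + c)) <= m * (eps/(2*m))). apply Rmult_le_compat_l; lra. lra. }
  unfold eps in *. lra.
Qed.

Lemma psi_big_left y : y < L1 c m -> exists w, 0 < w < ws /\ y < psi w.
Proof.
  intro Hy. set (w := Rmin (ws/2) ((L1 c m - y)/(2*m))).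
  assert (H1 : 0 < (L1 c m - y)/(2*m)) by (apply Rdiv_lt_0_compat; lra).
  assert (Hw : 0 < w) by (unfold w; apply Rmin_glb_lt; lra).
  assert (w <= ws/2) by apply Rmin_l.
  assert (w <= (L1 c m - y)/(2*m)) by apply Rmin_r.
  exists w. split. lra.
  pose proof (psi_lower c m Hc Hm w Hw).
  assert (m * w <= (L1 c m - y)/2).
  { assert (m * w <= m * ((L1 c m - y)/(2*m))) by (apply Rmult_le_compat_l; lra).
    assert (m * ((L1 c m - y)/(2*m)) = (L1 c m - y)/2) by (field; lra). lra. }
  unfold psi. lra.
Qed.

Lemma psi_big_right y : exists w, ws < w /\ y < psi w.
Proof.
  exists (ws + 1 + exp y). split. pose proof (exp_pos y). lra.
  pose proof (psi_ge_ln c m Hc Hm (ws + 1 + exp y) ltac:(pose proof (exp_pos y); lra)).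
  assert (y < ln (ws + 1 + exp y)).
  { rewrite <- (ln_exp y) at 1. apply ln_increasing. apply exp_pos. lra. }
  unfold psi. lra.
Qed.

Lemma psi_cont' x : 0 < x -> continuity_pt psi x.
Proof. intro. apply psi_cont; lra. Qed.

Lemma solve_left y : psi ws < y -> y < L1 c m -> exists w, 0 < w < ws /\ psi w = y.
Proof.
  intros H1 H2. destruct (psi_big_left y H2) as [a [Ha1 Ha2]].
  destruct (Ranalysis5.IVT_interv (fun x => y - psi x) a ws) as [w [Hw1 Hw2]]; try lra.
  { intros x Hx. apply (continuity_pt_minus (fun _ => y) psi).
    apply continuity_pt_const; intros ? ?; reflexivity. apply psi_cont'; lra. }
  exists w. assert (w <> ws) by (intro; subst; lra). split. lra. lra.
Qed.

Lemma solve_right y : psi ws < y -> exists w, ws < w /\ psi w = y.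
Proof.
  intros H1. destruct (psi_big_right y) as [b [Hb1 Hb2]].
  destruct (Ranalysis5.IVT_interv (fun x => psi x - y) ws b) as [w [Hw1 Hw2]]; try lra.
  { intros x Hx. apply (continuity_pt_minus psi (fun _ => y)).
    apply psi_cont'; lra. apply continuity_pt_const; intros ? ?; reflexivity. }
  exists w. assert (w <> ws) by (intro; subst; lra). split. lra. lra.
Qed.

Lemma uniq_left w1 w2 : 0 < w1 <= ws -> 0 < w2 <= ws -> psi w1 = psi w2 -> w1 = w2.
Proof.
  intros. destruct (Rtotal_order w1 w2) as [h|[h|h]]; auto.
  pose proof (psi_decr w1 w2); lra. pose proof (psi_decr w2 w1); lra.
Qed.

Lemma uniq_right w1 w2 : ws <= w1 -> ws <= w2 -> psi w1 = psi w2 -> w1 = w2.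
Proof.
  intros. destruct (Rtotal_order w1 w2) as [h|[h|h]]; auto.
  pose proof (psi_incr w1 w2); lra. pose proof (psi_incr w2 w1); lra.
Qed.

End Shape2.

Lemma bridge_D c m beta u : 2 <= c -> 0 < m -> 0 < beta -> 0 < u < 1 ->
  let t := (1 + c*u)/(1-u) in
  -(beta / Rpower (1+c) m) * (Rpower (1 + c*u) m - Rpower (1-u) m)
  = - (beta * (exp (m * ln t) - 1) * / exp (m * ln (t + c))).
Proof.
  intros Hc Hm Hb Hu t.
  assert (Ht : 1 < t). { unfold t. apply Rmult_lt_reg_r with (1-u). lra.
     unfold Rdiv. rewrite Rmult_assoc, Rinv_l by lra. nra. }
  assert (E1 : 1 - u = (1+c)/(t+c)). { unfold t. field. split; nra. }
  assert (E2 : 1 + c*u = t * (1 - u)). { unfold t. field. lra. }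
  assert (L2 : ln (1 - u) = ln (1 + c) - ln (t + c)).
  { rewrite E1. rewrite ln_div; lra. }
  assert (L3 : ln (1 + c*u) = ln t + ln (1 - u)).
  { rewrite E2. rewrite ln_mult; lra. }
  unfold Rpower. rewrite L3, L2.
  replace (m * (ln t + (ln (1 + c) - ln (t + c)))) with (m * ln t + m * ln (1+c) + - (m * ln (t+c))) by ring.
  replace (m * (ln (1 + c) - ln (t + c))) with (m * ln (1+c) + - (m * ln (t+c))) by ring.
  rewrite !exp_plus, !exp_Ropp.
  pose proof (exp_pos (m * ln (1+c))). pose proof (exp_pos (m * ln (t+c))).
  field. lra.
Qed.

Lemma bridge c m beta u : 2 <= c -> 0 < m -> 0 < beta -> 0 < u < 1 ->
  let t := (1 + c*u)/(1-u) in
  let D := -(beta / Rpower (1+c) m) * (Rpower (1 + c*u) m - Rpower (1-u) m) in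
  (u = (1 - exp D) / (1 + c * exp D) <-> psi c m (ln t) = ln beta).
Proof.
  intros Hc Hm Hb Hu t D.
  assert (Ht : 1 < t). { unfold t. apply Rmult_lt_reg_r with (1-u). lra.
     unfold Rdiv. rewrite Rmult_assoc, Rinv_l by lra. nra. }
  set (w := ln t).
  assert (Hw : 0 < w) by (unfold w; rewrite <- ln_1; apply ln_increasing; lra).
  assert (Hew : exp w = t) by (unfold w; apply exp_ln; lra).
  assert (HD : D = - (beta * (exp (m * w) - 1) * / exp (m * ln (t + c)))) by (apply bridge_D; auto).
  assert (HX : 0 < exp D) by apply exp_pos.
  assert (Hs : 0 < m*w) by nra. pose proof (expm1_pos _ Hs).
  pose proof (exp_pos (m * ln (t+c))).
  assert (SA : u = (1 - exp D) / (1 + c * exp D) <-> exp D = / t).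
  { unfold t. split; intro H1.
    - rewrite H1. field. split; nra.
    - rewrite H1. field. split; nra. }
  rewrite SA.
  assert (SB : exp D = / t <-> D = - w).
  { split; intro H1.
    - rewrite <- (ln_exp D), H1, ln_Rinv by lra. reflexivity.
    - rewrite H1, exp_Ropp, Hew. reflexivity. }
  rewrite SB.
  assert (Hpsi : psi c m w = ln (w * exp (m * ln (t + c)) / (exp (m*w) - 1))).
  { unfold psi. rewrite ln_div, ln_mult, ln_exp, Hew; try lra.
    apply Rmult_lt_0_compat; lra. }
  rewrite Hpsi. rewrite HD. split; intro H1.
  - f_equal. assert (beta * (exp (m * w) - 1) * / exp (m * ln (t + c)) = w) by lra.
    rewrite <- H2 at 1. field. lra.
  - assert (w * exp (m * ln (t + c)) / (exp (m * w) - 1) = beta).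
    { apply ln_inv; auto. apply Rdiv_lt_0_compat; [apply Rmult_lt_0_compat|]; lra. }
    rewrite <- H2. field. lra.
Qed.

Lemma is_sol_iff (q : nat) (z beta u : R) : 2 <= INR q - 1 -> 0 < z - 1 -> 0 < beta -> 0 < u < 1 ->
  (is_sol beta q z u <-> psi (INR q - 1) (z - 1) (ln ((1 + (INR q - 1)*u)/(1-u))) = ln beta).
Proof.
  intros Hc Hm Hb Hu. unfold is_sol, MF, Defs.Delta.
  replace (Rpower (INR q) (z-1)) with (Rpower (1 + (INR q - 1)) (z-1)) by (f_equal; ring).
  rewrite <- (bridge (INR q - 1) (z-1) beta u Hc Hm Hb Hu). split.
  - intros [_ H]. exact H.
  - intro H. split; [lra | exact H].
Qed.

Definition uof c w := (exp w - 1)/(exp w + c).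

Lemma uof_range c w : 2 <= c -> 0 < w -> 0 < uof c w < 1.
Proof.
  intros. unfold uof. pose proof (expm1_pos w H0). split.
  apply Rdiv_lt_0_compat; lra.
  apply Rmult_lt_reg_r with (exp w + c). lra. unfold Rdiv. rewrite Rmult_assoc, Rinv_l by lra. lra.
Qed.

Lemma uof_t c w : 2 <= c -> 0 < w -> ln ((1 + c * uof c w)/(1 - uof c w)) = w.
Proof.
  intros. pose proof (exp_pos w). replace ((1 + c * uof c w)/(1 - uof c w)) with (exp w).
  apply ln_exp. unfold uof. field. split; lra.
Qed.

Lemma uof_incr c a b : 2 <= c -> a < b -> uof c a < uof c b.
Proof.
  intros. unfold uof. pose proof (exp_pos a). pose proof (exp_pos b).
  pose proof (exp_increasing a b H0).
  apply Rmult_lt_reg_r with ((exp a + c) * (exp b + c)). nra.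
  replace ((exp a - 1) / (exp a + c) * ((exp a + c) * (exp b + c))) with ((exp a - 1) * (exp b + c)) by (field; lra).
  replace ((exp b - 1) / (exp b + c) * ((exp a + c) * (exp b + c))) with ((exp b - 1) * (exp a + c)) by (field; lra).
  nra.
Qed.

Lemma uof_inv c u : 2 <= c -> 0 < u < 1 -> uof c (ln ((1 + c*u)/(1-u))) = u.
Proof.
  intros. unfold uof. rewrite exp_ln. field. split; nra.
  apply Rdiv_lt_0_compat; nra.
Qed.

Lemma t_pos c u : 2 <= c -> 0 < u < 1 -> 0 < ln ((1 + c*u)/(1-u)).
Proof.
  intros. rewrite <- ln_1. apply ln_increasing. lra.
  apply Rmult_lt_reg_r with (1-u). lra.
  unfold Rdiv. rewrite Rmult_assoc, Rinv_l by lra. nra.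
Qed.

Theorem lemma5p4 (q : nat) (z : R) (hq : (2 < q)%nat) (hz : 2 <= z) :
  exists beta0 beta1 : R, 0 < beta0 < beta1 /\
  forall beta : R, 0 < beta ->
    (beta < beta0 -> forall u, is_sol beta q z u -> u = 0) /\
    (beta0 < beta < beta1 ->
       exists u1 u2, 0 < u1 < u2 /\ u2 < 1 /\
         is_sol beta q z u1 /\ is_sol beta q z u2 /\
         forall u, is_sol beta q z u -> u = 0 \/ u = u1 \/ u = u2) /\
    ((beta = beta0 \/ beta1 <= beta) ->
       exists u2, 0 < u2 < 1 /\ is_sol beta q z u2 /\
         forall u, is_sol beta q z u -> u = 0 \/ u = u2).
Proof.
  assert (Hc : 2 <= INR q - 1).
  { assert (3 <= INR q). { replace 3 with (INR 3) by (simpl; ring). apply le_INR. lia. } lra. }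
  assert (Hm : 0 < z - 1) by lra.
  set (c := INR q - 1) in *. set (m := z - 1) in *.
  destruct (exists_wstar c m Hc Hm) as [ws [Hws [Hneg Hpos]]].
  pose proof (psi_min c m ws Hc Hm Hws Hneg Hpos) as Pmin.
  pose proof (psi_lt_L1 c m ws Hc Hm Hws Hneg) as PL1.
  pose proof (solve_left c m ws Hc Hm Hws) as SL.
  pose proof (solve_right c m ws Hc Hm Hws) as SR.
  pose proof (uniq_left c m ws Hc Hm Hneg) as UL.
  pose proof (uniq_right c m ws Hc Hm Hws Hpos) as UR.
  assert (H01 : psi c m ws < L1 c m) by (apply PL1; lra).
  assert (Sol1 : forall beta u, 0 < beta -> is_sol beta q z u -> u = 0 \/
      (0 < u < 1 /\ psi c m (ln ((1 + c*u)/(1-u))) = ln beta)).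
  { intros beta u Hb Hs. destruct (Req_dec u 0) as [e|e]; [now left|right].
    destruct Hs as [Hu Hs]. assert (Hu' : 0 < u < 1) by lra. split; auto.
    apply (is_sol_iff q z beta u Hc Hm Hb Hu'). split; auto. }
  assert (Sol2 : forall beta w, 0 < beta -> 0 < w -> psi c m w = ln beta -> is_sol beta q z (uof c w)).
  { intros beta w Hb Hw Hp. pose proof (uof_range c w Hc Hw).
    apply (is_sol_iff q z beta _ Hc Hm Hb H). fold c m. rewrite uof_t; auto. }
  exists (exp (psi c m ws)), (exp (L1 c m)). split.
  { split. apply exp_pos. apply exp_increasing; auto. }
  intros beta Hb. split; [|split].
  - intros Hlt u Hu. destruct (Sol1 beta u Hb Hu) as [|[Hu' Hp]]; auto.
    exfalso. pose proof (t_pos c u Hc Hu').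
    assert (ln beta < psi c m ws).
    { rewrite <- (ln_exp (psi c m ws)). apply ln_increasing; auto. }
    destruct (Req_dec (ln ((1 + c * u) / (1 - u))) ws) as [e|e].
    + rewrite e in Hp. lra.
    + pose proof (Pmin _ H e). lra.
  - intros [Hl Hr].
    assert (Hl' : psi c m ws < ln beta).
    { rewrite <- (ln_exp (psi c m ws)). apply ln_increasing; auto. apply exp_pos. }
    assert (Hr' : ln beta < L1 c m).
    { rewrite <- (ln_exp (L1 c m)). apply ln_increasing; auto. }
    destruct (SL _ Hl' Hr') as [w1 [Hw1 Hp1]].
    destruct (SR _ Hl') as [w2 [Hw2 Hp2]].
    exists (uof c w1), (uof c w2).
    pose proof (uof_range c w1 Hc ltac:(lra)). pose proof (uof_range c w2 Hc ltac:(lra)).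
    split. split. lra. apply uof_incr; lra.
    split. lra. split. apply Sol2; auto; lra. split. apply Sol2; auto; lra.
    intros u Hu. destruct (Sol1 beta u Hb Hu) as [|[Hu' Hp]]; auto.
    right. pose proof (t_pos c u Hc Hu').
    set (w := ln ((1 + c * u) / (1 - u))) in *.
    rewrite <- (uof_inv c u Hc Hu'). fold w.
    destruct (Rle_or_lt w ws).
    + left. f_equal. apply UL; try lra. 
    + right. f_equal. apply UR; lra.
  - intros Hcase.
    destruct Hcase as [Heq | Hge].
    + exists (uof c ws). pose proof (uof_range c ws Hc Hws). split; auto. split.
      apply Sol2; auto. rewrite Heq, ln_exp. reflexivity.
      intros u Hu. destruct (Sol1 beta u Hb Hu) as [|[Hu' Hp]]; auto.
      right. pose proof (t_pos c u Hc Hu').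
      set (w := ln ((1 + c * u) / (1 - u))) in *.
      rewrite <- (uof_inv c u Hc Hu'). fold w. f_equal.
      destruct (Req_dec w ws) as [e|e]; auto. exfalso.
      pose proof (Pmin w H0 e). rewrite Heq, ln_exp in Hp. lra.
    + assert (Hge' : L1 c m <= ln beta).
      { rewrite <- (ln_exp (L1 c m)). apply ln_le; auto. apply exp_pos. }
      destruct (SR (ln beta) ltac:(lra)) as [w2 [Hw2 Hp2]].
      exists (uof c w2). pose proof (uof_range c w2 Hc ltac:(lra)). split; auto. split.
      apply Sol2; auto; lra.
      intros u Hu. destruct (Sol1 beta u Hb Hu) as [|[Hu' Hp]]; auto.
      right. pose proof (t_pos c u Hc Hu').
      set (w := ln ((1 + c * u) / (1 - u))) in *.
      rewrite <- (uof_inv c u Hc Hu'). fold w. f_equal.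
      destruct (Rle_or_lt w ws).
      * exfalso. pose proof (PL1 w H0 H1). lra.
      * apply UR; lra.
Qed.
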